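(* Let $J$ be a simple current of $\mathcal{A}$, $\psi\in\{0,1\}$, and let $\langle p,q\rangle$, $\langle p',q'\rangle$ be off-diagonal fields of $\mathcal{A}_{\rm perm}$. Then $$N_{(J,\psi)\langle p,q\rangle}^{\phantom{(J,\psi)\langle p,q\rangle}\langle p',q'\rangle}=N_{Jp}^{\ \ p'}N_{Jq}^{\ \ q'}+N_{Jp}^{\ \ q'}N_{Jq}^{\ \ p'}.$$ Consequently, if moreover $J$ has order two ($J\cdot J=0$), then $\langle p,q\rangle$ is a fixed point of $(J,\psi)$ (i.e. $N_{(J,\psi)\langle p,q\rangle}^{\phantom{(J,\psi)\langle p,q\rangle}\langle p,q\rangle}=1$), for either value of $\psi$, if and only if either $Jp=p$ and $Jq=q$, or $Jp=q$.
   Context: Let $\mathcal{A}$ be a unitary rational conformal field theory with finite set of primary fields $I$, identity $0\in I$, central charge $c$, conformal weights $h_i$, and modular matrices $S$ (symmetric, unitary, with $S_{0i}\ge S_{00}>0$) and $T=\mathrm{diag}(e^{2\pi i(h_i-c/24)})$; put $P=T^{1/2}ST^{2}ST^{1/2}$. Fusion coefficients of $\mathcal{A}$ are $N_{ij}^{\ \ k}=\sum_{m\in I}S_{im}S_{jm}\overline{S_{km}}/S_{0m}$ (non-negative integers). A simple current $J$ of $\mathcal{A}$ is a field with $S_{J0}=S_{00}$; for each $i$ there is then a unique field $Ji$ with $N_{Ji}^{\ \ k}=\delta_{k,Ji}$. The $\mathbb{Z}_2$ permutation orbifold $\mathcal{A}_{\rm perm}$ has primaries: diagonal $(i,\psi)$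 ($i\in I$, $\psi\in\{0,1\}$), off-diagonal $\langle i,j\rangle$ (unordered pairs $i\neq j$), twisted $\widehat{(i,\psi)}$; identity $(0,0)$; modular matrix $S^{BHS}$ given by $S^{BHS}_{\langle i,j\rangle\langle p,q\rangle}=S_{ip}S_{jq}+S_{iq}S_{jp}$, $S^{BHS}_{\langle i,j\rangle(p,\psi)}=S_{ip}S_{jp}$, $S^{BHS}_{\langle i,j\rangle\widehat{(p,\psi)}}=0$, $S^{BHS}_{(i,\psi)(j,\chi)}=\tfrac12 S_{ij}^2$, $S^{BHS}_{(i,\psi)\widehat{(p,\chi)}}=\tfrac12 e^{i\pi\psi}S_{ip}$, $S^{BHS}_{\widehat{(p,\psi)}\widehat{(q,\chi)}}=\tfrac12 e^{i\pi(\psi+\chi)}P_{pq}$ (and symmetric). Fusion coefficients of $\mathcal{A}_{\rm perm}$ are defined by the Verlinde formula $N_{AB}^{\ \ C}=\sum_{N}S^{BHS}_{AN}S^{BHS}_{BN}\overline{S^{BHS}_{CN}}/S^{BHS}_{(0,0)N}$, the sum running over all primaries $N$ of $\mathcal{A}_{\rm perm}$. *)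

(* Defs.v *)
From HB Require Import structures.
From mathcomp Require Import all_boot all_order all_algebra.
Set Implicit Arguments. Unset Strict Implicit. Unset Printing Implicit Defensive.
Import Order.TTheory GRing.Theory Num.Theory.
Local Open Scope ring_scope.

Section RCFT.
Variables (C : numClosedFieldType) (I : finType) (i0 : I).
(* S : the modular S-matrix of A; t : the diagonal of T^(1/2), i.e.
   t i = exp(i pi (h_i - c/24)), so that T = diag (t i ^+ 2). *)
Variables (S : I -> I -> C) (t : I -> C).

(* Fusion coefficients of A (Verlinde formula). *)
Definition fusion (i j k : I) : C :=
  \sum_(m : I) S i m * S j m * (S k m)^* / S i0 m.

Definition rcft_data : Prop :=
  (forall i j, S i j = S j i) /\
  (forall i j, \sum_(m : I) S i m * (S j m)^* = (i == j)%:R) /\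
  0 < S i0 i0 /\
  (forall i, S i0 i0 <= S i0 i) /\
  (forall i, `|t i| = 1) /\
  (forall i j k, exists n : nat, fusion i j k = n%:R).

Definition simple_current (J : I) : Prop := S J i0 = S i0 i0.

Definition Jact (J i : I) : I := odflt i [pick k | fusion J i k == 1].

(* P = T^(1/2) S T^2 S T^(1/2) *)
Definition Pmat (p q : I) : C :=
  t p * (\sum_(m : I) S p m * t m ^+ 4 * S m q) * t q.

(* Primaries of the Z2 permutation orbifold.  Off-diagonal fields <i,j>
   (unordered, i <> j) are represented by the 2-element set [set i; j]. *)
Inductive pfield :=
  | PDiag of I & bool
  | POff of {set I}
  | PTw of I & bool.

Definition el1 (A : {set I}) : I := nth i0 (enum A) 0.
Definition el2 (A : {set I}) : I := nth i0 (enum A) 1.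

Definition sgnb (b : bool) : C := (-1) ^+ b.

Definition Sperm (X Y : pfield) : C :=
  match X, Y with
  | POff A, POff B =>
      S (el1 A) (el1 B) * S (el2 A) (el2 B) + S (el1 A) (el2 B) * S (el2 A) (el1 B)
  | POff A, PDiag p _ | PDiag p _, POff A => S (el1 A) p * S (el2 A) p
  | POff _, PTw _ _ | PTw _ _, POff _ => 0
  | PDiag i _, PDiag j _ => 2^-1 * S i j ^+ 2
  | PDiag i psi, PTw p _ | PTw p _, PDiag i psi => 2^-1 * sgnb psi * S i p
  | PTw p psi, PTw q chi => 2^-1 * sgnb psi * sgnb chi * Pmat p q
  end.

Definition sum_pfields (F : pfield -> C) : C :=
  \sum_(i : I) \sum_(psi : bool) F (PDiag i psi)
  + \sum_(A : {set I} | #|A| == 2%N) F (POff A)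
  + \sum_(p : I) \sum_(psi : bool) F (PTw p psi).

Definition fusion_perm (X Y Z : pfield) : C :=
  sum_pfields (fun N => Sperm X N * Sperm Y N * (Sperm Z N)^* / Sperm (PDiag i0 false) N).

End RCFT.

(* Main.v *)
Require Import Defs.
From HB Require Import structures.
From mathcomp Require Import all_boot all_order all_algebra.
From mathcomp Require Import ring zify.
Set Implicit Arguments. Unset Strict Implicit. Unset Printing Implicit Defensive.
Import Order.TTheory GRing.Theory Num.Theory.
Local Open Scope ring_scope.

Lemma el12 (I : finType) (i0 : I) (A : {set I}) : #|A| == 2%N ->
  el1 i0 A != el2 i0 A /\ A = [set el1 i0 A; el2 i0 A].
Proof.
rewrite cardE /el1 /el2.
have := enum_uniq (mem A); have HA := mem_enum (mem A).
case: (enum A) HA => [|x [|y [|z s]]] //= HA.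
rewrite andbT inE => Hu _; split => //.
apply/setP => k; rewrite !inE -HA !inE; by [].
Qed.

Lemma el12_pair (I : finType) (i0 : I) (p q : I) : p != q ->
  (el1 i0 [set p; q] = p /\ el2 i0 [set p; q] = q) \/
  (el1 i0 [set p; q] = q /\ el2 i0 [set p; q] = p).
Proof.
move=> npq.
have := @el12 I i0 [set p; q]; rewrite cards2 npq => /(_ isT) [ne E].
set a := el1 i0 _ in ne E *; set b := el2 i0 _ in ne E *.
have Hp : p \in [set a; b] by rewrite -E !inE eqxx.
have Hq : q \in [set a; b] by rewrite -E !inE eqxx orbT.
rewrite !inE in Hp Hq.
case/orP: Hp => /eqP Hp; case/orP: Hq => /eqP Hq.
- by rewrite Hp Hq eqxx in npq.
- by left.
- by right.
- by rewrite Hp Hq eqxx in npq.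
Qed.

Lemma set2_eq (I : finType) (a b c d : I) : a != b -> [set a; b] = [set c; d] ->
  (c = a /\ d = b) \/ (c = b /\ d = a).
Proof.
move=> nab E.
have Ha : a \in [set c; d] by rewrite -E !inE eqxx.
have Hb : b \in [set c; d] by rewrite -E !inE eqxx orbT.
rewrite !inE in Ha Hb.
case/orP: Ha => /eqP Ha; case/orP: Hb => /eqP Hb.
- by rewrite Ha Hb eqxx in nab.
- by left.
- by right.
- by rewrite Ha Hb eqxx in nab.
Qed.

Lemma sum_pairs (C : numClosedFieldType) (I : finType) (i0 : I) (F : I -> I -> C)
  (symF : forall a b, F a b = F b a) :
  (\sum_(A : {set I} | #|A| == 2%N) F (el1 i0 A) (el2 i0 A)) *+ 2
  = \sum_a \sum_(b | a != b) F a b.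
Proof.
rewrite pair_big_dep /=.
rewrite (partition_big (fun x : I * I => [set x.1; x.2]) (fun A : {set I} => #|A| == 2%N)); last first.
  by move=> [x y] /= nxy; rewrite cards2 nxy.
rewrite -sumrMnl; apply: eq_bigr => A HA.
have [ne E] := el12 i0 HA.
move: (el1 i0 A) (el2 i0 A) ne E => e1 e2 ne E; subst A.
rewrite (bigD1 (e1, e2)) /=; last by rewrite ne eqxx.
rewrite (bigD1 (e2, e1)) /=; last first.
  apply/andP; split; first by rewrite eq_sym ne /= setUC.
  by apply/eqP => -[h _]; rewrite h eqxx in ne.
rewrite big1 ?addr0 ?(symF e2 e1) ?mulr2n //.
move=> [x y] /= /andP [/andP [/andP [nxy /eqP Exy] n1] n2].
have [[h1 h2]|[h1 h2]] := set2_eq ne (esym Exy); subst x y.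
  by rewrite eqxx in n1.
by rewrite eqxx in n2.
Qed.

Lemma sum_sep (C : numClosedFieldType) (I : finType) (f h : I -> C) :
  \sum_a \sum_b (f a * h b) = (\sum_a f a) * (\sum_b h b).
Proof. rewrite mulr_suml; apply: eq_bigr => a _; by rewrite mulr_sumr. Qed.

Lemma two_neq0 (C : numClosedFieldType) : (2 : C) != 0.
Proof. by rewrite pnatr_eq0. Qed.

Lemma part1 (C : numClosedFieldType) (I : finType) (i0 : I)
  (S : I -> I -> C) (t : I -> C) (Ssym : forall i j, S i j = S j i)
  (J : I) (psi : bool) (p q p' q' : I) : p != q -> p' != q' ->
     fusion_perm i0 S t (PDiag J psi) (POff [set p; q]) (POff [set p'; q'])
     = fusion i0 S J p p' * fusion i0 S J q q'
       + fusion i0 S J p q' * fusion i0 S J q p'.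
Proof.
move=> npq npq'.
rewrite /fusion_perm /sum_pfields /=.
rewrite [X in _ + X]big1 ?addr0; last by move=> a _; rewrite big1 // => b _; rewrite /= !mulr0 !mul0r.
set P1 := el1 i0 [set p; q]; set P2 := el2 i0 [set p; q].
set Q1 := el1 i0 [set p'; q']; set Q2 := el2 i0 [set p'; q'].
pose g x y a := S J a * S x a * (S y a)^* / S i0 a.
pose Fsep a b := g P1 Q1 a * g P2 Q2 b + g P1 Q2 a * g P2 Q1 b
               + g P2 Q1 a * g P1 Q2 b + g P2 Q2 a * g P1 Q1 b.
have HF : forall a b, S a J * S b J * (S P1 a * S P2 b + S P1 b * S P2 a)
    * (S Q1 a * S Q2 b + S Q1 b * S Q2 a)^* / (S a i0 * S b i0) = Fsep a b.
  move=> a b; rewrite /Fsep /g (Ssym a J) (Ssym b J) (Ssym a i0) (Ssym b i0).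
  rewrite rmorphD !rmorphM invfM /=; ring.
have HD : forall i, 2^-1 * S J i ^+ 2 * (S P1 i * S P2 i) * (S Q1 i * S Q2 i)^*
     / (2^-1 * S i0 i ^+ 2) = g P1 Q1 i * g P2 Q2 i.
  move=> i; rewrite /g invfM invrK rmorphM /=.
  have h2 := two_neq0 C.
  transitivity ((2 * 2^-1) * (S J i ^+ 2 * (S P1 i * S P2 i) * ((S Q1 i)^* * (S Q2 i)^*)
     * (S i0 i ^+ 2)^-1)); first by ring.
  rewrite mulfV // mul1r -exprVn; ring.
under eq_bigr do rewrite big_bool /= HD.
under [X in _ + X]eq_bigr do rewrite HF.
have Hsym : forall a b, Fsep a b = Fsep b a by move=> a b; rewrite /Fsep; ring.
have H2 := sum_pairs i0 Hsym.
have Hall : \sum_a \sum_b Fsep a b = 2 * ((\sum_a g P1 Q1 a) * (\sum_a g P2 Q2 a)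
    + (\sum_a g P1 Q2 a) * (\sum_a g P2 Q1 a)).
  rewrite /Fsep; under eq_bigr do rewrite !big_split /=.
  rewrite !big_split /= !sum_sep; ring.
have Hdiag : forall a, \sum_b Fsep a b = Fsep a a + \sum_(b | a != b) Fsep a b.
  move=> a; rewrite (bigD1 a) //=; congr (_ + _); apply: eq_bigl => b; by rewrite eq_sym.
have E : (\sum_i (g P1 Q1 i * g P2 Q2 i + g P1 Q1 i * g P2 Q2 i)
   + \sum_(A : {set I} | #|A| == 2%N) Fsep (el1 i0 A) (el2 i0 A)) *+ 2
   = \sum_a \sum_b Fsep a b.
  rewrite mulrnDl H2 -sumrMnl -big_split /=; apply: eq_bigr => a _.
  rewrite Hdiag; congr (_ + _); rewrite /Fsep /g; ring.
rewrite Hall -mulr_natl in E.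
have := mulfI (two_neq0 C) E => ->.
rewrite /fusion /P1 /P2 /Q1 /Q2.
have [[-> ->]|[-> ->]] := el12_pair i0 npq;
have [[-> ->]|[-> ->]] := el12_pair i0 npq'; rewrite /g; ring.
Qed.
Lemma exists_max (C : numDomainType) (I : finType) (i : I) (f : I -> C) :
  (forall x, f x \is Num.real) -> exists k, forall j, f j <= f k.
Proof.
move=> fr.
suff [k Hk] : exists k, forall j, j \in enum I -> f j <= f k.
  by exists k => j; apply: Hk; rewrite mem_enum.
elim: (enum I) => [|x s [k IH]]; first by exists i.
case/orP: (real_leVge (fr x) (fr k)) => Hxk.
- exists k => j; rewrite inE => /orP [/eqP -> //|]; exact: IH.
- exists x => j; rewrite inE => /orP [/eqP -> //|js]; exact: le_trans (IH j js) Hxk.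
Qed.

Lemma d_pos (C : numClosedFieldType) (I : finType) (i0 : I) (S : I -> I -> C) (t : I -> C) :
  rcft_data i0 S t -> forall m, 0 < S i0 m.
Proof. by case=> _ [_ [H0 [H1 _]]] m; exact: lt_le_trans H0 (H1 m). Qed.

Lemma eigS (C : numClosedFieldType) (I : finType) (i0 : I) (S : I -> I -> C) (t : I -> C) :
  rcft_data i0 S t -> forall J k m,
  \sum_j fusion i0 S J k j * S j m = S J m / S i0 m * S k m.
Proof.
case=> Ssym [Sorth _] J k m.
transitivity (\sum_m' (S J m' * S k m' / S i0 m') * \sum_j (S m j * (S m' j)^*)).
  rewrite /fusion; under eq_bigr do rewrite mulr_suml.
  rewrite exchange_big; apply: eq_bigr => m' _; rewrite mulr_sumr; apply: eq_bigr => j _.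
  rewrite (Ssym m j) (Ssym m' j); ring.
under eq_bigr do rewrite Sorth.
rewrite (bigD1 m) //= eqxx mulr1 big1 ?addr0; first by ring.
by move=> m' nm; rewrite eq_sym (negbTE nm) mulr0.
Qed.

Lemma fusion_ge0 (C : numClosedFieldType) (I : finType) (i0 : I) (S : I -> I -> C) (t : I -> C) :
  rcft_data i0 S t -> forall J k j, 0 <= fusion i0 S J k j.
Proof. by case=> _ [_ [_ [_ [_ Hn]]]] J k j; have [n ->] := Hn J k j; exact: ler0n. Qed.

Lemma fusion_conj (C : numClosedFieldType) (I : finType) (i0 : I) (S : I -> I -> C) (t : I -> C) :
  rcft_data i0 S t -> forall J k j, (fusion i0 S J k j)^* = fusion i0 S J k j.
Proof. by case=> _ [_ [_ [_ [_ Hn]]]] J k j; have [n ->] := Hn J k j; exact: conjC_nat. Qed.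

Lemma rowsum (C : numClosedFieldType) (I : finType) (i0 : I) (S : I -> I -> C) (t : I -> C) :
  rcft_data i0 S t -> forall J, simple_current i0 S J -> forall p,
  \sum_k fusion i0 S J p k * S k i0 = S p i0.
Proof.
move=> H J HJ p; rewrite (eigS H); case: (H) => Ssym _.
move: HJ; rewrite /simple_current => ->; rewrite mulfV ?mul1r //; exact/lt0r_neq0/(d_pos H).
Qed.

Lemma bound (C : numClosedFieldType) (I : finType) (i0 : I) (S : I -> I -> C) (t : I -> C) :
  rcft_data i0 S t -> forall J, simple_current i0 S J -> forall m,
  `|S J m / S i0 m| <= 1.
Proof.
move=> H J HJ m.
have dp := d_pos H.
have [k Hk] := @exists_max C I i0 (fun k => `|S k m| / S i0 k)
  (fun x => ger0_real (divr_ge0 (normr_ge0 _) (ltW (dp x)))).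
have Hj : forall j, `|S j m| <= (`|S k m| / S i0 k) * S i0 j.
  by move=> j; rewrite -ler_pdivrMr //; exact: Hk.
have eig := eigS H J k m.
have key : `|S J m / S i0 m| * `|S k m| <= `|S k m|.
  rewrite -normrM -eig.
  apply: le_trans (ler_norm_sum _ _ _) _.
  apply: (@le_trans _ _ (\sum_j fusion i0 S J k j * ((`|S k m| / S i0 k) * S i0 j))).
    apply: ler_sum => j _; rewrite normrM ger0_norm ?(fusion_ge0 H) //.
    by apply: ler_wpM2l; [exact: (fusion_ge0 H) | exact: Hj].
  have -> : \sum_j fusion i0 S J k j * ((`|S k m| / S i0 k) * S i0 j)
     = (`|S k m| / S i0 k) * \sum_j fusion i0 S J k j * S j i0.
    rewrite mulr_sumr; apply: eq_bigr => j _; case: H => Ssym _; rewrite (Ssym j i0); ring.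
  rewrite (rowsum H HJ); case: H => Ssym _; rewrite (Ssym k i0) divfK //.
  exact/lt0r_neq0/dp.
case: (eqVneq (S k m) 0) => Skm; last first.
  by rewrite ger_pMl ?normr_gt0 in key.
exfalso.
have z : forall j, S j m = 0.
  move=> j; apply/eqP; rewrite -normr_eq0 eq_le normr_ge0 andbT.
  by apply: le_trans (Hj j) _; rewrite Skm normr0 mul0r mul0r.
case: H => Ssym [Sorth _].
have := Sorth m m; rewrite eqxx big1 ?(oner_eq0 C) //.
  by move=> /esym/eqP; rewrite oner_eq0.
by move=> j _; rewrite (Ssym m j) z mul0r.
Qed.

Lemma sum_prod3 (C : numClosedFieldType) (I : finType) (f g : I -> I -> C) :
  \sum_m (\sum_j f j m) * (\sum_j g j m) = \sum_j \sum_j' \sum_m f j m * g j' m.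
Proof.
transitivity (\sum_m \sum_j \sum_j' f j m * g j' m).
  by apply: eq_bigr => m _; rewrite mulr_suml; apply: eq_bigr => j _; rewrite mulr_sumr.
by rewrite exchange_big; apply: eq_bigr => j _; exact: exchange_big.
Qed.

Lemma rowsq (C : numClosedFieldType) (I : finType) (i0 : I) (S : I -> I -> C) (t : I -> C) :
  rcft_data i0 S t -> forall J, simple_current i0 S J -> forall p,
  \sum_j fusion i0 S J p j ^+ 2 <= 1.
Proof.
move=> H J HJ p.
have Sorth : forall i j, \sum_m S i m * (S j m)^* = (i == j)%:R by case: H => _ [].
set a := fusion i0 S J p.
have E : \sum_m (\sum_j a j * S j m) * (\sum_j a j * S j m)^* = \sum_j a j ^+ 2.
  under eq_bigr do rewrite rmorph_sum.
  rewrite sum_prod3; apply: eq_bigr => j _.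
  have pt : forall j', \sum_m a j * S j m * (a j' * S j' m)^* = a j * a j' * (j == j')%:R.
    move=> j'; rewrite -Sorth mulr_sumr; apply: eq_bigr => m _.
    rewrite rmorphM /= /a (fusion_conj H); ring.
  under eq_bigr do rewrite pt.
  rewrite (bigD1 j) //= eqxx mulr1 big1 ?addr0; first by rewrite expr2.
  by move=> j' nj; rewrite eq_sym (negbTE nj) mulr0.
rewrite -E.
under eq_bigr do rewrite (eigS H) -normCK.
apply: (@le_trans _ _ (\sum_m `|S p m| ^+ 2)).
  apply: ler_sum => m _; rewrite normrM exprMn.
  apply: ler_piMl; first exact: exprn_ge0.
  exact: exprn_ile1 (normr_ge0 _) (bound H HJ m).
under eq_bigr do rewrite normCK.
by rewrite Sorth eqxx.
Qed.

Lemma row_one (C : numClosedFieldType) (I : finType) (i0 : I) (S : I -> I -> C) (t : I -> C) :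
  rcft_data i0 S t -> forall J, simple_current i0 S J -> forall p,
  exists j, fusion i0 S J p j = 1 /\ forall k, k != j -> fusion i0 S J p k = 0.
Proof.
move=> H J HJ p.
have Hn : forall k, exists n, fusion i0 S J p k = n%:R by case: H => _ [_ [_ [_ [_ Hn]]]] k; exact: Hn.
have ge0 := fusion_ge0 H J p.
have sq := rowsq H HJ p.
set a := fusion i0 S J p in Hn ge0 sq *.
have [j0 nz] : exists j, a j != 0.
  case: (pickP (fun j => a j != 0)) => [j Hj|Hall]; first by exists j.
  exfalso; have := rowsum H HJ p; rewrite -/a big1; last first.
    by move=> k _; move: (Hall k) => /negbFE/eqP ->; rewrite mul0r.
  move/eqP; rewrite eq_sym; case: (H) => Ssym _; rewrite Ssym.
  by rewrite (negbTE (lt0r_neq0 (d_pos H p))).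
have one : a j0 ^+ 2 <= 1.
  apply: le_trans sq; rewrite (bigD1 j0) //= lerDl; apply: sumr_ge0 => i _; exact: exprn_ge0.
have two : forall k, k != j0 -> a j0 ^+ 2 + a k ^+ 2 <= 1.
  move=> k nk; apply: le_trans sq; rewrite (bigD1 j0) //= lerD2l (bigD1 k) //= lerDl.
  by apply: sumr_ge0 => i _; exact: exprn_ge0.
have [n0 E0] := Hn j0.
rewrite E0 pnatr_eq0 in nz.
exists j0; split.
  move: one; rewrite E0 -natrX lern1 => h.
  suff -> : n0 = 1%N by []. move: h nz; clear; nia.
move=> k nk; have [nk' Ek] := Hn k; move: (two k nk).
rewrite E0 Ek -!natrX -natrD lern1 => h.
suff -> : nk' = 0%N by [].
move: h nz; clear; nia.
Qed.

Lemma Jact_spec (C : numClosedFieldType) (I : finType) (i0 : I) (S : I -> I -> C) (t : I -> C) :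
  rcft_data i0 S t -> forall J, simple_current i0 S J -> forall p k,
  fusion i0 S J p k = (k == Jact i0 S J p)%:R.
Proof.
move=> H J HJ p.
have [j [H1 H0]] := row_one H HJ p.
have -> : Jact i0 S J p = j.
  rewrite /Jact; case: pickP => [k /eqP Hk|Hn] /=.
    apply/eqP; apply: contraT => nk; move: Hk; rewrite H0 //.
    by move/esym/eqP; rewrite oner_eq0.
  by move: (Hn j); rewrite H1 eqxx.
move=> k; case: (eqVneq k j) => [->|nk]; first by rewrite H1.
by rewrite H0.
Qed.

Lemma rowshift (C : numClosedFieldType) (I : finType) (i0 : I) (S : I -> I -> C) (t : I -> C) :
  rcft_data i0 S t -> forall J, simple_current i0 S J -> forall p m,
  S (Jact i0 S J p) m = S J m / S i0 m * S p m.
Proof.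
move=> H J HJ p m; rewrite -(eigS H).
under eq_bigr do rewrite (Jact_spec H HJ).
rewrite (bigD1 (Jact i0 S J p)) //= eqxx mul1r big1 ?addr0 //.
by move=> j nj; rewrite (negbTE nj) mul0r.
Qed.

Lemma rows_inj (C : numClosedFieldType) (I : finType) (i0 : I) (S : I -> I -> C) (t : I -> C) :
  rcft_data i0 S t -> forall a b, (forall m, S a m = S b m) -> a = b.
Proof.
case=> _ [Sorth _] a b E; have := Sorth a b.
under eq_bigr do rewrite -E.
rewrite Sorth eqxx; case: (eqVneq a b) => // _ /eqP; by rewrite eqr_nat.
Qed.

Lemma Jinv (C : numClosedFieldType) (I : finType) (i0 : I) (S : I -> I -> C) (t : I -> C) :
  rcft_data i0 S t -> forall J, simple_current i0 S J -> Jact i0 S J J = i0 ->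
  forall p, Jact i0 S J (Jact i0 S J p) = p.
Proof.
move=> H J HJ JJ p; apply: (rows_inj H) => m.
have dn : S i0 m != 0 by exact/lt0r_neq0/(d_pos H).
have c2 : (S J m / S i0 m) * (S J m / S i0 m) = 1.
  have := rowshift H HJ J m; rewrite JJ => e.
  apply: (mulIf dn); rewrite mul1r [in RHS]e; field.
  exact: dn.
rewrite !(rowshift H HJ) mulrA c2 mul1r //.
Qed.

Theorem mainTheorem3 (C : numClosedFieldType) (I : finType) (i0 : I)
  (S : I -> I -> C) (t : I -> C) :
  rcft_data i0 S t ->
  forall J : I, simple_current i0 S J ->
  (forall (psi : bool) (p q p' q' : I), p != q -> p' != q' ->
     fusion_perm i0 S t (PDiag J psi) (POff [set p; q]) (POff [set p'; q'])
     = fusion i0 S J p p' * fusion i0 S J q q'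
       + fusion i0 S J p q' * fusion i0 S J q p')
  /\
  (Jact i0 S J J = i0 ->
   forall (psi : bool) (p q : I), p != q ->
     (fusion_perm i0 S t (PDiag J psi) (POff [set p; q]) (POff [set p; q]) = 1
      <-> (Jact i0 S J p = p /\ Jact i0 S J q = q) \/ Jact i0 S J p = q)).
Proof.
move=> H J HJ.
have Ssym : forall i j, S i j = S j i by case: H.
split; first by move=> psi p q p' q' npq npq'; exact: part1.
move=> JJ psi p q npq.
rewrite (@part1 C I i0 S t Ssym) // !(Jact_spec H HJ).
have inv := Jinv H HJ JJ.
case: (eqVneq (Jact i0 S J p) q) => [Eaq|naq].
  have Ebp : Jact i0 S J q = p by rewrite -Eaq inv.
  rewrite Eaq Ebp !eqxx (negbTE npq) mul0r add0r mulr1.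
  by split => _; [right|].
rewrite mul0r addr0.
have h10 : ((1 : C) = 0) <-> False by split => // /eqP; rewrite oner_eq0.
case: (eqVneq p (Jact i0 S J p)) => [Ep|np];
case: (eqVneq q (Jact i0 S J q)) => [Eq|nq] /=; rewrite ?mul1r ?mul0r ?mulr0.
- by split => _ //; left.
- split; first by move/esym/h10.
  by case=> [[_ /esym/eqP]|/eqP]; rewrite ?(negbTE nq) ?(negbTE naq).
- split; first by move/esym/h10.
  by case=> [[/esym/eqP]|/eqP]; rewrite ?(negbTE np) ?(negbTE naq).
- split; first by move/esym/h10.
  by case=> [[/esym/eqP]|/eqP]; rewrite ?(negbTE np) ?(negbTE naq).
Qed.
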